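(* Let $\mathcal{X}=\mathcal{X}^{(1)}\times\cdots\times\mathcal{X}^{(d)}$ with each $\mathcal{X}^{(l)}$ finite, fix $i\in\{1,\dots,d\}$, let $\pi=\otimes_{l=1}^d\pi^{(l)}$ be a positive product distribution, let $P\in\mathcal{L}(\mathcal{X})$ be $\pi$-stationary and, for $j\ne i$, let $L_j\in\mathcal{L}(\mathcal{X}^{(j)})$ be $\pi^{(j)}$-stationary. Let $K_i:=\{(\otimes_{j<i}L_j)\otimes M\otimes(\otimes_{j>i}L_j):\ M\in\mathcal{L}(\mathcal{X}^{(i)})\ \pi^{(i)}\text{-stationary}\}$, each element identified with its edge measure $(\pi\boxtimes Q)(x,y)=\pi(x)Q(x,y)$. Let $f(t)=-\ln t$. Let $(X_n)_{n\ge1}$ be a Markov chain with transition matrix $P$ and arbitrary initial distribution, and $E_n:=\frac1n\big(\sum_{k=1}^{n-1}\delta_{(X_k,X_{k+1})}+\delta_{(X_n,X_1)}\big)$. Then $\limsup_{n\to\infty}\frac1n\ln\mathbb{P}(E_n\in K_i)\le-D_f^\pi\big(P\,\|\,(\otimes_{j<i}L_j)\otimes L^{(i)}_*\otimes(\otimes_{j>i}L_j)\big)$, where $L_*^{(i)}(x^i,y^i)\propto\prod_{x^{(-i)},y^{(-i)}}P(x,y)^{\pi(x)\mathbf{Z}(x^{(-i)},y^{(-i)})/Z(x^i,y^i)}$ (normalized over $y^i$), with $\mathbf{Z}(x^{(-i)},y^{(-i)})=\prod_{j\ne i}L_j(x^j,y^j)$ and $Z(x^i,y^i)=\sum_{x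^{(-i)},y^{(-i)}}\pi(x)\mathbf{Z}(x^{(-i)},y^{(-i)})$.
   Context: $\mathcal{L}(\Omega)$: transition matrices on finite $\Omega$. $D_f^{\pi}(M\|L):=\sum_{x}\pi(x)\sum_y L(x,y)f\big(M(x,y)/L(x,y)\big)$ with conventions $0f(0/0)=0$, $0f(a/0)=a\lim_{t\to0^+}tf(1/t)$; for $f=-\ln$ this is the reverse KL divergence $\sum_{x,y}\pi(x)L(x,y)\ln\frac{L(x,y)}{M(x,y)}$. $(\otimes_jL_j)(x,y)=\prod_jL_j(x^j,y^j)$; $x^{(-i)}=(x^j)_{j\ne i}$. $P$ is $\pi$-stationary if $\pi P=\pi$. $L^{(i)}_*$ is the unique minimizer over $L\in\mathcal{L}(\mathcal{X}^{(i)})$ of $D_f^\pi(P\|(\otimes_{j<i}L_j)\otimes L\otimes(\otimes_{j>i}L_j))$. *)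

(* Defs.v *)
From HB Require Import structures.
From mathcomp Require Import all_boot all_order all_algebra.
From mathcomp Require Import all_classical all_reals all_analysis.
Unset Printing Implicit Defensive.
Import Order.TTheory GRing.Theory Num.Theory.
Local Open Scope ring_scope.

Definition state {d : nat} (X : 'I_d -> finType) := {dffun forall l : 'I_d, X l}.

Section Defs.
Variables (R : realType) (d : nat) (X : 'I_d -> finType).
Notation S := (state X).

Definition is_trans (T : finType) (M : T -> T -> R) :=
  (forall x y, 0 <= M x y) /\ (forall x, \sum_y M x y = 1).
Definition is_distr (T : finType) (mu : T -> R) :=
  (forall x, 0 <= mu x) /\ \sum_x mu x = 1.
Definition is_stationary (T : finType) (p : T -> R) (M : T -> T -> R) :=
  forall y, \sum_x p x * M x y = p y.

Definition prod_distr (pil : forall l, X l -> R) (x : S) : R :=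
  \prod_l pil l (x l).

Definition tensor_at (i : 'I_d) (L : forall j, X j -> X j -> R)
  (M : X i -> X i -> R) (x y : S) : R :=
  M (x i) (y i) * \prod_(j | j != i) L j (x j) (y j).

(* reverse-KL D_f^pi(P || Q) for f = -ln, with the stated conventions:
   Q(x,y) = 0 gives 0;  Q(x,y) > 0 = P(x,y) gives +oo. *)
Definition rev_kl_term (p q : R) : \bar R :=
  if q == 0 then 0%E else if p == 0 then +oo%E else (q * ln (q / p))%:E.
Definition Df_revKL (T : finType) (pi : T -> R) (P Q : T -> T -> R) : \bar R :=
  (\sum_(x : T) \sum_(y : T) (pi x)%:E * rev_kl_term (P x y) (Q x y))%E.

Definition Zbold (i : 'I_d) (L : forall j, X j -> X j -> R) (x y : S) : R :=
  \prod_(j | j != i) L j (x j) (y j).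
Definition Zi (i : 'I_d) (pi : S -> R) (L : forall j, X j -> X j -> R)
  (a b : X i) : R :=
  \sum_(x : S | x i == a) \sum_(y : S | y i == b) pi x * Zbold i L x y.
Definition Lstar_w (i : 'I_d) (pi : S -> R) (P : S -> S -> R)
  (L : forall j, X j -> X j -> R) (a b : X i) : R :=
  \prod_(x : S | x i == a) \prod_(y : S | y i == b)
     P x y `^ (pi x * Zbold i L x y / Zi i pi L a b).
Definition Lstar (i : 'I_d) (pi : S -> R) (P : S -> S -> R)
  (L : forall j, X j -> X j -> R) (a b : X i) : R :=
  Lstar_w i pi P L a b / \sum_(b' : X i) Lstar_w i pi P L a b'.

(* Markov chain paths of length n+1 : X_1, ..., X_{n+1} (indices 0..n) *)
Definition path_prob (n : nat) (mu : S -> R) (P : S -> S -> R)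
  (w : {ffun 'I_n.+1 -> S}) : R :=
  mu (w ord0) * \prod_(k < n) P (w (inord k)) (w (inord k.+1)).

(* closed empirical pair measure E_{n+1} of the path w *)
Definition emp_pair (n : nat) (w : {ffun 'I_n.+1 -> S}) (x y : S) : R :=
  ((\sum_(k < n) ((w (inord k) == x) && (w (inord k.+1) == y))%:R)
   + ((w ord_max == x) && (w ord0 == y))%:R) / n.+1%:R.

Definition in_Ki (i : 'I_d) (pil : forall l, X l -> R)
  (L : forall j, X j -> X j -> R) (E : S -> S -> R) : Prop :=
  exists M : X i -> X i -> R, is_trans _ M /\ is_stationary _ (pil i) M /\
    forall x y, E x y = prod_distr pil x * tensor_at i L M x y.

Definition prob_Ki (n : nat) (i : 'I_d) (pil : forall l, X l -> R)
  (L : forall j, X j -> X j -> R) (mu : S -> R) (P : S -> S -> R) : R :=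
  \sum_(w : {ffun 'I_n.+1 -> S} | `[< in_Ki i pil L (emp_pair n w) >])
     path_prob n mu P w.

Definition eln (p : R) : \bar R := if p == 0 then -oo%E else (ln p)%:E.

End Defs.

Arguments is_trans {R T} M.
Arguments is_distr {R T} mu.
Arguments is_stationary {R T} p M.
Arguments prod_distr {R d X} pil x.
Arguments tensor_at {R d X} i L M x y.
Arguments rev_kl_term {R} p q.
Arguments Df_revKL {R T} pi P Q.
Arguments Zbold {R d X} i L x y.
Arguments Zi {R d X} i pi L a b.
Arguments Lstar_w {R d X} i pi P L a b.
Arguments Lstar {R d X} i pi P L a b.
Arguments path_prob {R d X} n mu P w.
Arguments emp_pair {R d X} n w x y.
Arguments in_Ki {R d X} i pil L E.
Arguments prob_Ki {R d X} n i pil L mu P.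
Arguments eln {R} p.

(* Main.v *)
Require Import Defs.
From HB Require Import structures.
From mathcomp Require Import all_boot all_order all_algebra.
From mathcomp Require Import all_classical all_reals all_analysis.
From mathcomp Require Import ring lra.
Import Order.TTheory GRing.Theory Num.Theory.
Local Open Scope ring_scope.

Section Generic.
Variables (R : realType) (d : nat) (X : 'I_d -> finType).
Notation S := (state X).

Lemma sum_prod_dffun (G : forall j, X j -> R) :
  \sum_(y : S) \prod_j G j (y j) = \prod_j \sum_(c : X j) G j c.
Proof.
pose P_ := fun j => [ffun c : X j => G j c].
transitivity (\sum_(t : fprod X) \prod_(j in 'I_d) P_ j (t j)).
  rewrite (reindex (@dffun_of_fprod _ X)); last first.
    by apply/onW_bij/dffun_of_fprod_bij.
  apply: eq_bigr => t _; apply: eq_bigr => j _; by rewrite !ffunE.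
rewrite big_fprod -(bigA_distr_big_dep (tagged_with X) (fun i j => untag 0 (P_ i) j)).
apply: eq_bigr => j _.
transitivity (\sum_(c : X j) P_ j c); last by apply: eq_bigr => c _; rewrite ffunE.
by rewrite (big_tag P_ j).
Qed.
End Generic.

Section Upd.
Variables (R : realType) (d : nat) (X : 'I_d -> finType) (i : 'I_d).
Notation S := (state X).

Definition upd (y : S) (c : X i) : S :=
  @finfun _ X (fun j => if i =P j is ReflectT e then eq_rect i X c j e else y j).

Lemma upd_i y c : upd y c i = c.
Proof. rewrite /upd ffunE; case: eqP => // e; by rewrite (eq_axiomK e). Qed.

Lemma upd_j y c j : j != i -> upd y c j = y j.
Proof. move=> ji; rewrite /upd ffunE; case: eqP => // e; by rewrite e eqxx in ji. Qed.

Lemma upd_upd y c c' : upd (upd y c) c' = upd y c'.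
Proof.
apply/ffunP => j; case: (eqVneq j i) => [->|ji]; first by rewrite !upd_i.
by rewrite !upd_j.
Qed.

Lemma upd_id y : upd y (y i) = y.
Proof.
apply/ffunP => j; case: (eqVneq j i) => [->|ji]; first by rewrite !upd_i.
by rewrite !upd_j.
Qed.

Lemma sum_slice_const (F : S -> R) (b b' : X i) :
  (forall y c, F (upd y c) = F y) ->
  \sum_(y : S | y i == b) F y = \sum_(y : S | y i == b') F y.
Proof.
move=> HF.
rewrite (reindex_onto (fun y => upd y b) (fun y => upd y b')); last first.
  by move=> y /eqP yb; rewrite upd_upd -yb upd_id.
apply: eq_big => y; last by move=> _; rewrite HF.
rewrite upd_i eqxx /= upd_upd.
apply/eqP/eqP => [<-|<-]; first by rewrite upd_i.
by rewrite upd_id.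
Qed.

Lemma sum_slices (F : S -> R) :
  \sum_(y : S) F y = \sum_(c : X i) \sum_(y : S | y i == c) F y.
Proof. by rewrite (partition_big (fun y : S => y i) predT). Qed.

End Upd.

Section Paths.
Variables (R : realType) (T : finType).

Definition ext n (w' : {ffun 'I_n.+1 -> T}) (s : T) : {ffun 'I_n.+2 -> T} :=
  [ffun k : 'I_n.+2 => if (insub (val k) : option 'I_n.+1) is Some k' then w' k' else s].

End Paths.
Arguments ext {T} n w' s.

Section Paths2.
Variables (R : realType) (T : finType).
Lemma ext_lt n (w' : {ffun 'I_n.+1 -> T}) (s : T) (k : nat) : (k < n.+1)%N -> ext n w' s (inord k) = w' (inord k).
Proof.
move=> kn; have vk : \val (inord k : 'I_n.+2) = k := inordK (ltnW kn).
rewrite ffunE; case: insubP => [k' _ ek|] /=.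
  by congr (w' _); apply/val_inj; rewrite /= ek /= vk inordK.
by rewrite vk kn.
Qed.

Lemma ext_max n (w' : {ffun 'I_n.+1 -> T}) (s : T) : ext n w' s (inord n.+1) = s.
Proof.
have vk : \val (inord n.+1 : 'I_n.+2) = n.+1 := inordK (ltnSn _).
rewrite ffunE; case: insubP => [k' |] //= ; rewrite vk => kn.
by rewrite ltnn in kn.
Qed.
Lemma sum_ext n (F : {ffun 'I_n.+2 -> T} -> R) :
  \sum_w F w = \sum_(w' : {ffun 'I_n.+1 -> T}) \sum_(s : T) F (ext n w' s).
Proof.
rewrite pair_big /=.
pose g (w : {ffun 'I_n.+2 -> T}) :=
  ([ffun k : 'I_n.+1 => w (widen_ord (leqnSn _) k)], w ord_max).
rewrite (reindex (fun p : {ffun 'I_n.+1 -> T} * T => ext n p.1 p.2)) //.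
exists g.
  move=> [w' s] _; rewrite /g; congr pair.
    apply/ffunP => k; rewrite !ffunE; case: insubP => [k' _ ek|].
      by congr (w' _); apply/val_inj.
    by rewrite /= ltn_ord.
  rewrite ffunE; case: insubP => [k' |] //= kn; by rewrite ltnn in kn.
move=> w _; apply/ffunP => k; rewrite ffunE; case: insubP => [k' _ ek|kn] /=.
  by rewrite ffunE; congr (w _); apply/val_inj.
congr (w _); apply/val_inj => /=.
by have := ltn_ord k; rewrite ltnS => h; apply/eqP; rewrite eqn_leq h leqNgt kn.
Qed.

Definition pp n (mu : T -> R) (Q : T -> T -> R) (w : {ffun 'I_n.+1 -> T}) : R :=
  mu (w ord0) * \prod_(k < n) Q (w (inord k)) (w (inord k.+1)).

Lemma path_sum (mu : T -> R) (Q : T -> T -> R) n :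
  (forall x, \sum_y Q x y = 1) ->
  \sum_(w : {ffun 'I_n.+1 -> T}) pp n mu Q w = \sum_x mu x.
Proof.
move=> HQ; elim: n => [|n IH].
  rewrite /pp (reindex (fun s : T => [ffun _ : 'I_1 => s])).
    by apply: eq_bigr => s _; rewrite big_ord0 mulr1 ffunE.
  exists (fun w : {ffun 'I_1 -> T} => w ord0) => [s _|w _]; first by rewrite ffunE.
  by apply/ffunP => k; rewrite ffunE (ord1 k).
rewrite sum_ext -IH; apply: eq_bigr => w' _.
have E0 : forall s, ext n w' s ord0 = w' ord0.
  move=> s; rewrite ffunE; case: insubP => [k' _ ek|] //=.
  by congr (w' _); apply/val_inj; rewrite /= ek.
have E : forall s, \prod_(k < n.+1) Q (ext n w' s (inord k)) (ext n w' s (inord k.+1)) =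
   (\prod_(k < n) Q (w' (inord k)) (w' (inord k.+1))) * Q (w' (inord n)) s.
  move=> s; rewrite big_ord_recr /= ext_max ext_lt //; congr (_ * _).
  apply: eq_bigr => k _; rewrite !ext_lt ?ltnS ?ltn_ord //; exact: ltnW.
rewrite /pp; under eq_bigr => s _ do rewrite E E0.
by rewrite -big_distrr /= -big_distrr /= HQ mulr1.
Qed.

Lemma pick2 (g : T -> T -> R) (a b : T) :
  \sum_x \sum_y ((a == x) && (b == y))%:R * g x y = g a b.
Proof.
rewrite (bigD1 a) //= [X in _ + X]big1 ?addr0; last first.
  by move=> x xa; apply: big1 => y _; rewrite eq_sym (negbTE xa) mul0r.
rewrite (bigD1 b) //= [X in _ + X]big1 ?addr0; first by rewrite !eqxx mul1r.
by move=> y yb; rewrite eqxx eq_sym (negbTE yb) mul0r.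
Qed.

End Paths2.
Arguments sum_slices {R d X} i F.
Arguments sum_slice_const {R d X} i F b b'.
Arguments upd {d X} i y c.
Arguments pp {R T} n mu Q w.

Lemma sum2_term (R : realType) (T1 T2 : finType) (F : T1 -> T2 -> R) a b :
  (forall x y, 0 <= F x y) -> F a b <= \sum_x \sum_y F x y.
Proof.
move=> F0; rewrite (bigD1 a) //= (bigD1 b) //= -addrA lerDl.
by rewrite addr_ge0 ?sumr_ge0 // => x _; apply: sumr_ge0.
Qed.

Section LS.
Variable R : realType.

Lemma limsup_bound (p : nat -> R) (D : R) : (forall n, 0 <= p n) ->
  (forall e, 0 < e -> exists K, forall n, p n <= expR (- (n.+1%:R * (D - e)) + K)) ->
  (limn_esup (fun n : nat => ((n.+1%:R)^-1)%:E * eln (p n)) <= (- D)%:E)%E.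
Proof.
move=> p0 Hb; apply/lee_addgt0Pr => e e0.
have e20 : 0 < e / 2 by rewrite divr_gt0.
have [K HK] := Hb _ e20.
pose N := Num.trunc (K * 2 / e).
apply: le_trans.
  apply: ereal_inf_lbound; exists [set n : nat | (N <= n)%N]%classic; first by exists N.
  reflexivity.
apply: ge_ereal_sup => _ [n /= Nn <-].
have m0 : (0 : R) < n.+1%:R by rewrite ltr0n.
rewrite /eln; case: eqP => [_|/eqP pn0].
  by rewrite mulrNy gtr0_sg ?invr_gt0 // mul1e leNye.
have pp : 0 < p n by rewrite lt_neqAle eq_sym pn0 p0.
rewrite -EFinM -EFinD lee_fin ler_pdivrMl //.
have h1 : ln (p n) <= - (n.+1%:R * (D - e / 2)) + K.
  by rewrite -[leRHS]expRK ler_ln ?posrE ?expR_gt0 // HK.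
have h2 : K * 2 / e < n.+1%:R.
  apply: lt_le_trans (truncnS_gt _) _; by rewrite ler_nat ltnS.
have h3 : K * 2 < n.+1%:R * e by rewrite -ltr_pdivrMr.
set m := n.+1%:R in h1 h2 h3 m0 *.
nra.
Qed.
End LS.

Section Main.
Variables (R : realType) (d : nat) (X : 'I_d -> finType) (i : 'I_d)
  (pil : forall l, X l -> R) (P : state X -> state X -> R)
  (L : forall j, X j -> X j -> R) (mu : state X -> R).
Hypotheses (Hpil : forall l, is_distr (pil l)) (Hpos : forall l (a : X l), 0 < pil l a)
  (HP : is_trans P)
  (HL : forall j, j != i -> is_trans (L j) /\ is_stationary (pil j) (L j))
  (Hmu : is_distr mu)
  (HN : forall a : X i, 0 < \sum_(b : X i) Lstar_w i (prod_distr pil) P L a b).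

Local Notation S := (state X).
Local Notation pi := (prod_distr pil).
Local Notation Z := (Zbold i L).
Local Notation Zi' := (Zi i pi L).
Local Notation Lw := (Lstar_w i pi P L).
Local Notation Ls := (Lstar i pi P L).
Local Notation Q := (tensor_at i L Ls).
Definition N (a : X i) := \sum_(b : X i) Lw a b.

Lemma pi_gt0 x : 0 < pi x.
Proof. by apply: prodr_gt0 => l _. Qed.

Lemma Z_ge0 x y : 0 <= Z x y.
Proof. apply: prodr_ge0 => j ji; by case: (HL _ ji) => -[h _] _. Qed.

Lemma Z_upd x y c : Z x (upd i y c) = Z x y.
Proof. by apply: eq_bigr => j ji; rewrite upd_j. Qed.

Lemma sigma1 x (b : X i) : \sum_(y : S | y i == b) Z x y = 1.
Proof.
have Hc : forall b', \sum_(y : S | y i == b') Z x y = \sum_(y : S | y i == b) Z x y.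
  by move=> b'; apply: sum_slice_const => y c; rewrite Z_upd.
have tot : \sum_(y : S) Z x y = #|X i|%:R * \sum_(y : S | y i == b) Z x y.
  rewrite (sum_slices i) (eq_bigr _ (fun c _ => Hc c)) sumr_const.
  by rewrite mulr_natl.
have tot2 : \sum_(y : S) Z x y = #|X i|%:R.
  pose G := fun j (c : X j) => if j == i then 1 else L j (x j) c.
  transitivity (\sum_(y : S) \prod_j G j (y j)).
    apply: eq_bigr => y _; rewrite (bigD1 i) //= /G eqxx mul1r.
    by apply: eq_bigr => j ji; rewrite (negbTE ji).
  rewrite sum_prod_dffun (bigD1 i) //= [X in _ * X]big1 ?mulr1.
    by rewrite /G eqxx sumr_const.
  move=> j ji; rewrite /G (negbTE ji); by case: (HL _ ji) => -[_ ->].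
have cp : (#|X i|%:R : R) != 0.
  by rewrite pnatr_eq0 -lt0n; apply/card_gt0P; exists b.
by apply: (mulfI cp); rewrite -tot tot2 mulr1.
Qed.


Lemma Zi_eq a b : Zi' a b = \sum_(x : S | x i == a) pi x.
Proof.
by apply: eq_bigr => x _; rewrite -big_distrr /= sigma1 mulr1.
Qed.

Lemma Zi_pos (x : S) b : 0 < Zi' (x i) b.
Proof.
rewrite Zi_eq (bigD1 x) //= ltr_pwDl ?pi_gt0 //.
by apply: sumr_ge0 => y _; exact: ltW (pi_gt0 y).
Qed.

Lemma Zi_le a b : Zi' a b <= \sum_(x : S) pi x.
Proof.
rewrite Zi_eq [leRHS](bigID (fun x : S => x i == a)) /= lerDl.
by apply: sumr_ge0 => y _; exact: ltW (pi_gt0 y).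
Qed.

Lemma blocks (F : X i -> X i -> S -> S -> R) :
  \sum_(x : S) \sum_(y : S) F (x i) (y i) x y =
  \sum_(a : X i) \sum_(b : X i) \sum_(x : S | x i == a) \sum_(y : S | y i == b) F a b x y.
Proof.
rewrite (sum_slices i); apply: eq_bigr => a _.
transitivity (\sum_(x : S | x i == a) \sum_(b : X i) \sum_(y : S | y i == b) F a b x y).
  apply: eq_bigr => x /eqP xa; rewrite (sum_slices i); apply: eq_bigr => b _.
  by apply: eq_bigr => y /eqP yb; rewrite xa yb.
by rewrite exchange_big.
Qed.

Definition H (a b : X i) := \sum_(x : S | x i == a) \sum_(y : S | y i == b) pi x * Z x y * ln (Z x y).
Definition c (a b : X i) := - Zi' a b * ln (N a) + H a b.

Lemma c_const a b : c a b = c a a.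
Proof.
rewrite /c !Zi_eq; congr (_ + _).
apply: eq_bigr => x _; apply: sum_slice_const => y c'; by rewrite Z_upd.
Qed.


Lemma ln_prod (I : Type) (r : seq I) (Pr : pred I) (F : I -> R) :
  (forall k, Pr k -> 0 < F k) ->
  ln (\prod_(k <- r | Pr k) F k) = \sum_(k <- r | Pr k) ln (F k).
Proof.
move=> Fpos; elim: r => [|x r IH]; first by rewrite !big_nil ln1.
rewrite !big_cons; case: ifP => Px //.
by rewrite lnM ?IH // posrE ?Fpos // prodr_gt0.
Qed.

Lemma P_ge0 x y : 0 <= P x y. Proof. by case: HP. Qed.
Lemma P_le1 x y : P x y <= 1.
Proof.
case: HP => H0 H1; rewrite -(H1 x) (bigD1 y) //= lerDl.
by apply: sumr_ge0 => z _.
Qed.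

Lemma Lw_ge0 a b : 0 <= Lw a b.
Proof. by apply: prodr_ge0 => x _; apply: prodr_ge0 => y _; exact: powR_ge0. Qed.

Lemma Ls_ge0 a b : 0 <= Ls a b.
Proof. by rewrite /Lstar divr_ge0 ?Lw_ge0 // ltW. Qed.

Lemma Ls_sum a : \sum_b Ls a b = 1.
Proof. by rewrite /Lstar -mulr_suml divff // gt_eqF. Qed.

Lemma good_P a b (x y : S) : Lw a b != 0 -> x i == a -> y i == b -> Z x y != 0 ->
  0 < P x y.
Proof.
move=> Lw0 xa yb Z0; rewrite lt_neqAle P_ge0 andbT eq_sym.
apply: contra Lw0 => /eqP P0.
apply/prodf_eq0; exists x => //; apply/prodf_eq0; exists y => //.
rewrite P0 powR_eq0 eqxx /=.
rewrite mulf_neq0 ?invr_eq0 ?mulf_neq0 // ?gt_eqF ?pi_gt0 //.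
by rewrite -(eqP xa) Zi_pos.
Qed.

Lemma ln_Lw a b : Lw a b != 0 ->
  ln (Lw a b) = \sum_(x : S | x i == a) \sum_(y : S | y i == b) pi x * Z x y / Zi' a b * ln (P x y).
Proof.
move=> Lw0; rewrite /Lstar_w ln_prod => [|x xa].
  apply: eq_bigr => x xa; rewrite ln_prod => [|y yb].
    by apply: eq_bigr => y yb; rewrite ln_powR.
  case: (eqVneq (Z x y) 0) => Z0; first by rewrite Z0 mulr0 mul0r powRr0.
  by rewrite powR_gt0 // (good_P _ _ _ _ Lw0 xa yb Z0).
apply: prodr_gt0 => y yb.
case: (eqVneq (Z x y) 0) => Z0; first by rewrite Z0 mulr0 mul0r powRr0.
by rewrite powR_gt0 // (good_P _ _ _ _ Lw0 xa yb Z0).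
Qed.


Lemma sum2D (Px Py : pred S) (F G : S -> S -> R) :
  \sum_(x | Px x) \sum_(y | Py y) (F x y + G x y) =
  \sum_(x | Px x) \sum_(y | Py y) F x y + \sum_(x | Px x) \sum_(y | Py y) G x y.
Proof. by rewrite -big_split; apply: eq_bigr => x _; rewrite big_split. Qed.

Lemma sum2B (Px Py : pred S) (F G : S -> S -> R) :
  \sum_(x | Px x) \sum_(y | Py y) (F x y - G x y) =
  \sum_(x | Px x) \sum_(y | Py y) F x y - \sum_(x | Px x) \sum_(y | Py y) G x y.
Proof. by rewrite -sumrB; apply: eq_bigr => x _; rewrite sumrB. Qed.

Lemma sum2Mr (Px Py : pred S) (F : S -> S -> R) k :
  \sum_(x | Px x) \sum_(y | Py y) (F x y * k) = (\sum_(x | Px x) \sum_(y | Py y) F x y) * k.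
Proof. by rewrite mulr_suml; apply: eq_bigr => x _; rewrite mulr_suml. Qed.

Lemma sum2Ml (Px Py : pred S) (F : S -> S -> R) k :
  \sum_(x | Px x) \sum_(y | Py y) (k * F x y) = k * (\sum_(x | Px x) \sum_(y | Py y) F x y).
Proof. by rewrite mulr_sumr; apply: eq_bigr => x _; rewrite mulr_sumr. Qed.

Lemma phistar_eq a b : Lw a b != 0 ->
  \sum_(x : S | x i == a) \sum_(y : S | y i == b) pi x * Z x y * ln (Ls a b * Z x y / P x y) = c a b.
Proof.
move=> Lw0.
case: (eqVneq (Zi' a b) 0) => Zi0.
  have nx : forall x : S, x i == a -> False.
    by move=> x /eqP xa; move: (Zi_pos x b); rewrite xa Zi0 ltxx.
  rewrite /c /H Zi0 oppr0 mul0r add0r.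
  by rewrite big1 => [|x /nx //]; rewrite big1 // => x /nx.
have Lwp : 0 < Lw a b by rewrite lt_neqAle eq_sym Lw0 Lw_ge0.
have key : forall x y : S, x i == a -> y i == b ->
   pi x * Z x y * ln (Ls a b * Z x y / P x y) =
   (pi x * Z x y * ln (Z x y) - pi x * Z x y * ln (N a)) +
   (pi x * Z x y * ln (Lw a b) - pi x * Z x y * ln (P x y)).
  move=> x y xa yb; case: (eqVneq (Z x y) 0) => Z0.
    by rewrite Z0 !(mulr0, mul0r, subrr, addr0).
  have Pp := good_P _ _ _ _ Lw0 xa yb Z0.
  have Zp : 0 < Z x y by rewrite lt_neqAle eq_sym Z0 Z_ge0.
  have Np : 0 < N a := HN a.
  have Lsp : 0 < Ls a b by rewrite /Lstar divr_gt0.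
  rewrite ln_div ?posrE ?mulr_gt0 ?divr_gt0 //.
  rewrite (@lnM _ (Ls a b) (Z x y)) ?posrE //.
  rewrite /Lstar ln_div ?posrE //. rewrite /N.
  ring.
  by rewrite invr_gt0.
transitivity (\sum_(x : S | x i == a) \sum_(y : S | y i == b)
   ((pi x * Z x y * ln (Z x y) - pi x * Z x y * ln (N a)) +
   (pi x * Z x y * ln (Lw a b) - pi x * Z x y * ln (P x y)))).
  by apply: eq_bigr => x xa; apply: eq_bigr => y yb; exact: key.
have ZiE : \sum_(x : S | x i == a) \sum_(y : S | y i == b) pi x * Z x y = Zi' a b by [].
have HE : \sum_(x : S | x i == a) \sum_(y : S | y i == b) pi x * Z x y * ln (Z x y) = H a b by [].
have PE : \sum_(x : S | x i == a) \sum_(y : S | y i == b) pi x * Z x y * ln (P x y) = Zi' a b * ln (Lw a b).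
  rewrite ln_Lw // -sum2Ml; apply: eq_bigr => x _; apply: eq_bigr => y _.
  by field.
rewrite sum2D !sum2B !sum2Mr ZiE HE PE /c; ring.
Qed.


Lemma QE (x y : S) : Q x y = Ls (x i) (y i) * Z x y. Proof. by []. Qed.

Lemma Q_ge0 x y : 0 <= Q x y.
Proof. by rewrite QE mulr_ge0 ?Ls_ge0 ?Z_ge0. Qed.

Lemma Q_rows (x : S) : \sum_y Q x y = 1.
Proof.
rewrite (sum_slices i) -(Ls_sum (x i)); apply: eq_bigr => b _.
transitivity (\sum_(y : S | y i == b) Ls (x i) b * Z x y).
  by apply: eq_bigr => y /eqP yb; rewrite QE yb.
by rewrite -mulr_sumr sigma1 mulr1.
Qed.

Lemma Q_le1 (x y : S) : Q x y <= 1.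
Proof.
rewrite -(Q_rows x) (bigD1 y) //= lerDl.
by apply: sumr_ge0 => z _; exact: Q_ge0.
Qed.

Lemma Q_ne0_P (x y : S) : Q x y != 0 -> 0 < P x y.
Proof.
rewrite QE mulf_eq0 negb_or => /andP[Ls0 Z0].
have Lw0 : Lw (x i) (y i) != 0.
  by apply: contra Ls0 => /eqP L0; rewrite /Lstar L0 mul0r.
exact: (good_P _ _ _ _ Lw0 (eqxx _) (eqxx _) Z0).
Qed.

Definition Dst := \sum_x \sum_y pi x * (Q x y * ln (Q x y / P x y)).

Lemma D_real : Df_revKL pi P Q = Dst%:E.
Proof.
rewrite /Df_revKL /Dst -sumEFin; apply: eq_bigr => x _.
rewrite -sumEFin; apply: eq_bigr => y _; rewrite /rev_kl_term.
case: (eqVneq (Q x y) 0) => [->|Q0]; first by rewrite mul0r mulr0 mule0.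
have Pp := Q_ne0_P _ _ Q0.
by rewrite gt_eqF.
Qed.

Lemma Dst_eq : Dst = \sum_a c a a.
Proof.
rewrite /Dst.
transitivity (\sum_(x : S) \sum_(y : S) (fun a b (x y : S) =>
   Ls a b * (pi x * Z x y * ln (Ls a b * Z x y / P x y))) (x i) (y i) x y).
  by apply: eq_bigr => x _; apply: eq_bigr => y _; rewrite QE /=; ring.
rewrite (blocks (fun a b (x y : S) => Ls a b * (pi x * Z x y * ln (Ls a b * Z x y / P x y)))); apply: eq_bigr => a _.
transitivity (\sum_b Ls a b * c a a); last by rewrite -mulr_suml Ls_sum mul1r.
apply: eq_bigr => b _; rewrite sum2Ml.
case: (eqVneq (Lw a b) 0) => Lw0.
  by rewrite /Lstar Lw0 !mul0r.
by rewrite phistar_eq // c_const.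
Qed.


Lemma cardS_gt0 : (0 < #|S|)%N.
Proof.
case: (pickP (@predT S)) => [x _|h]; first by apply/card_gt0P; exists x.
case: Hmu => _; rewrite big_pred0 // => /eqP; by rewrite eq_sym oner_eq0.
Qed.

Definition Pt (eta : R) (x y : S) := if P x y == 0 then eta else P x y.
Definition Rd (del : R) (x y : S) := (1 - del) * Q x y + del / #|S|%:R.

Section Params.
Variables (del eta : R).
Hypotheses (del0 : 0 < del) (del1 : del < 1) (eta0 : 0 < eta) (eta1 : eta <= 1).

Lemma Pt_gt0 x y : 0 < Pt eta x y.
Proof. rewrite /Pt; case: eqP => // /eqP P0; by rewrite lt_neqAle eq_sym P0 P_ge0. Qed.
Lemma Pt_le1 x y : Pt eta x y <= 1.
Proof. rewrite /Pt; case: eqP => //; by rewrite P_le1. Qed.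
Lemma P_le_Pt x y : P x y <= Pt eta x y.
Proof. rewrite /Pt; case: eqP => [->|//]; exact: ltW. Qed.
Lemma lnPt_le0 x y : 0 <= - ln (Pt eta x y).
Proof. by rewrite oppr_ge0 ln_le0 // Pt_le1. Qed.

Lemma cardSR : (0 : R) < #|S|%:R.
Proof. by rewrite ltr0n cardS_gt0. Qed.

Lemma Rd_ge_unif x y : del / #|S|%:R <= Rd del x y.
Proof. by rewrite /Rd lerDr mulr_ge0 ?Q_ge0 // subr_ge0 ltW. Qed.
Lemma unif_gt0 : 0 < del / #|S|%:R.
Proof. by rewrite divr_gt0 // cardSR. Qed.
Lemma Rd_gt0 x y : 0 < Rd del x y.
Proof. exact: lt_le_trans unif_gt0 (Rd_ge_unif x y). Qed.
Lemma Rd_ge_Q x y : (1 - del) * Q x y <= Rd del x y.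
Proof. by rewrite /Rd lerDl ltW // unif_gt0. Qed.
Lemma Rd_le1 x y : Rd del x y <= 1.
Proof.
rewrite /Rd -[leRHS](subrK del) lerD //.
  by rewrite -[leRHS]mulr1 ler_wpM2l ?Q_le1 // subr_ge0 ltW.
rewrite ler_pdivrMr ?cardSR // ler_peMr ?(ltW del0) //.
by rewrite ler1n cardS_gt0.
Qed.
Lemma Rd_rows x : \sum_y Rd del x y = 1.
Proof.
rewrite big_split /=.
have -> : \sum_(y : S) del / #|S|%:R = del.
  rewrite sumr_const (_ : (del / #|S|%:R) *+ #|S| = del / #|S|%:R * #|S|%:R); last by rewrite mulr_natr.
  by rewrite divfK ?gt_eqF ?cardSR.
by rewrite -mulr_sumr Q_rows mulr1 subrK.
Qed.


Definition phi (a b : X i) := \sum_(x : S | x i == a) \sum_(y : S | y i == b)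
  pi x * Z x y * (ln (Rd del x y) - ln (Pt eta x y)).

Lemma sum2_ge_term (Px Py : pred S) (F : S -> S -> R) x0 y0 :
  (forall x y, Px x -> Py y -> 0 <= F x y) -> Px x0 -> Py y0 ->
  F x0 y0 <= \sum_(x | Px x) \sum_(y | Py y) F x y.
Proof.
move=> F0 px py; rewrite (bigD1 x0) //= (bigD1 y0) //= -addrA lerDl.
rewrite addr_ge0 ?sumr_ge0 // => [y /andP[? _]|x /andP[? _]]; first exact: F0.
by apply: sumr_ge0 => y ?; exact: F0.
Qed.

Lemma piZ_ge0 (x y : S) : 0 <= pi x * Z x y.
Proof. by rewrite mulr_ge0 ?Z_ge0 // ltW // pi_gt0. Qed.

Lemma phi_bound eps0 a b : 0 <= eps0 ->
  - ln (1 - del) * \sum_(x : S) pi x <= eps0 ->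
  (forall a b (x y : S), 0 < pi x * Z x y ->
     c a b - Zi' a b * ln (del / #|S|%:R) <= pi x * Z x y * - ln eta) ->
  c a b - eps0 <= phi a b.
Proof.
move=> e0 Hd He.
case: (eqVneq (Lw a b) 0) => Lw0.
  have /prodf_eq0[x0 xa /prodf_eq0[y0 yb]] : Lw a b == 0 by rewrite Lw0.
  rewrite powR_eq0 => /andP[/eqP P0 ex0].
  have pz : 0 < pi x0 * Z x0 y0.
    rewrite lt_neqAle piZ_ge0 andbT eq_sym; apply: contra ex0 => /eqP ->.
    by rewrite mul0r.
  have T : forall x y : S, x i == a -> y i == b ->
     pi x * Z x y * ln (del / #|S|%:R) + pi x * Z x y * - ln (Pt eta x y) <=
     pi x * Z x y * (ln (Rd del x y) - ln (Pt eta x y)).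
    move=> x y _ _; rewrite -mulrDr ler_wpM2l ?piZ_ge0 // lerD2r.
    by rewrite ler_ln ?posrE ?unif_gt0 ?Rd_gt0 // Rd_ge_unif.
  apply: le_trans; last first.
  by apply: ler_sum => x1 xa1; apply: ler_sum => y1 yb1; exact: T.
  rewrite sum2D sum2Mr.
  have -> : \sum_(x : S | x i == a) \sum_(y : S | y i == b) pi x * Z x y = Zi' a b by [].
  have Ht := @sum2_ge_term (fun x : S => x i == a) (fun y : S => y i == b) (fun x y => pi x * Z x y * - ln (Pt eta x y)) x0 y0 (fun x y _ _ => mulr_ge0 (piZ_ge0 x y) (lnPt_le0 x y)) xa yb.
  rewrite /Pt P0 eqxx in Ht.
  have := He a b x0 y0 pz.
  have := lnPt_le0 x0 y0.
  lra.
have Lwp : 0 < Lw a b by rewrite lt_neqAle eq_sym Lw0 Lw_ge0.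
have Lsp : 0 < Ls a b by rewrite /Lstar divr_gt0.
have T : forall x y : S, x i == a -> y i == b ->
   pi x * Z x y * ln (1 - del) + pi x * Z x y * ln (Ls a b * Z x y / P x y) <=
   pi x * Z x y * (ln (Rd del x y) - ln (Pt eta x y)).
  move=> x y xa yb; case: (eqVneq (Z x y) 0) => Z0.
    by rewrite Z0 !(mulr0, mul0r, add0r).
  have Pp := good_P _ _ _ _ Lw0 xa yb Z0.
  have Zp : 0 < Z x y by rewrite lt_neqAle eq_sym Z0 Z_ge0.
  have QE' : Q x y = Ls a b * Z x y by rewrite QE (eqP xa) (eqP yb).
  have Np := HN a.
  rewrite /Pt (gt_eqF Pp) ln_div ?posrE ?mulr_gt0 ?invr_gt0 // -mulrDr ler_wpM2l ?piZ_ge0 //.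
  rewrite addrA lerD2r -lnM ?posrE ?mulr_gt0 ?subr_gt0 ?invr_gt0 //.
  by rewrite ler_ln ?posrE ?mulr_gt0 ?subr_gt0 ?Rd_gt0 ?invr_gt0 // -QE' Rd_ge_Q.
apply: le_trans; last first.
  by apply: ler_sum => x1 xa1; apply: ler_sum => y1 yb1; exact: T.
rewrite sum2D sum2Mr phistar_eq //.
have -> : \sum_(x : S | x i == a) \sum_(y : S | y i == b) pi x * Z x y = Zi' a b by [].
have l0 : ln (1 - del) <= 0 by rewrite ln_le0 // lerBlDr lerDl ltW.
have := ler_wnM2r l0 (Zi_le a b).
lra.
Qed.


Lemma A_bound eps0 (M : X i -> X i -> R) : is_trans M -> 0 <= eps0 ->
  - ln (1 - del) * \sum_(x : S) pi x <= eps0 ->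
  (forall a b (x y : S), 0 < pi x * Z x y ->
     c a b - Zi' a b * ln (del / #|S|%:R) <= pi x * Z x y * - ln eta) ->
  \sum_a c a a - eps0 * #|X i|%:R <=
  \sum_x \sum_y pi x * tensor_at i L M x y * (ln (Rd del x y) - ln (Pt eta x y)).
Proof.
move=> [M0 M1] e0 Hd He.
rewrite (_ : \sum_x \sum_y _ = \sum_(x : S) \sum_(y : S)
   M (x i) (y i) * (pi x * Z x y * (ln (Rd del x y) - ln (Pt eta x y)))); last first.
  by apply: eq_bigr => x _; apply: eq_bigr => y _; rewrite /tensor_at /Zbold /=; ring.
rewrite (blocks (fun a b (x y : S) => M a b * (pi x * Z x y * (ln (Rd del x y) - ln (Pt eta x y))))).
have -> : eps0 * #|X i|%:R = \sum_(a : X i) eps0 by rewrite sumr_const mulr_natr.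
rewrite -sumrB; apply: ler_sum => a _.
apply: le_trans (_ : \sum_b M a b * (c a b - eps0) <= _).
  rewrite (eq_bigr (fun b => M a b * (c a a - eps0))); last by move=> b _; rewrite c_const.
  by rewrite -mulr_suml M1 mul1r.
apply: ler_sum => b _; rewrite sum2Ml ler_wpM2l //.
exact: phi_bound.
Qed.

Definition Kc := \sum_(x : S) \sum_(y : S) - ln (Pt eta x y).

Lemma emp_identity n (w : {ffun 'I_n.+1 -> S}) (g : S -> S -> R) :
  n.+1%:R * (\sum_x \sum_y emp_pair n w x y * g x y) =
  \sum_(k < n) g (w (inord k)) (w (inord k.+1)) + g (w ord_max) (w ord0).
Proof.
rewrite -sum2Ml.
transitivity (\sum_(x : S) \sum_(y : S)
  ((\sum_(k < n) ((w (inord k) == x) && (w (inord k.+1) == y))%:R * g x y) +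
   ((w ord_max == x) && (w ord0 == y))%:R * g x y)).
  apply: eq_bigr => x _; apply: eq_bigr => y _.
  rewrite /emp_pair mulrA mulrCA divff ?pnatr_eq0 // mulr1 mulrDl mulr_suml //.
rewrite sum2D pick2; congr (_ + _).
under eq_bigr => x _ do rewrite exchange_big /=.
rewrite exchange_big /=; apply: eq_bigr => k _; exact: pick2.
Qed.


Lemma Kc_ge (x y : S) : - ln (Pt eta x y) <= Kc.
Proof.
exact: (@sum2_ge_term xpredT xpredT (fun x y => - ln (Pt eta x y)) x y
  (fun x y _ _ => lnPt_le0 x y)).
Qed.

Lemma path_bound n (w : {ffun 'I_n.+1 -> S}) K0 :
  K0 <= \sum_x \sum_y emp_pair n w x y * (ln (Rd del x y) - ln (Pt eta x y)) ->
  path_prob n mu P w <= pp n mu (Rd del) w * expR (- (n.+1%:R * K0) + Kc).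
Proof.
move=> HK.
have Pt_eq : forall x y, Pt eta x y = Rd del x y * expR (ln (Pt eta x y) - ln (Rd del x y)).
  move=> x y; rewrite expRB !lnK ?posrE ?Pt_gt0 ?Rd_gt0 //.
  by rewrite mulrC divfK // gt_eqF // Rd_gt0.
have mu0 : 0 <= mu (w ord0) by case: Hmu.
apply: le_trans (_ : mu (w ord0) * \prod_(k < n) Pt eta (w (inord k)) (w (inord k.+1)) <= _).
  rewrite /path_prob ler_wpM2l //; apply: ler_prod => k _.
  by rewrite P_ge0 P_le_Pt.
rewrite (eq_bigr _ (fun k _ => Pt_eq _ _)) big_split /= -expR_sum /pp -mulrA.
apply: ler_wpM2l => //; apply: ler_wpM2l; first by apply: prodr_ge0 => k _; rewrite ltW ?Rd_gt0.
rewrite ler_expR.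
have E := emp_identity n w (fun x y => ln (Pt eta x y) - ln (Rd del x y)).
have E2 : \sum_(k < n) (ln (Pt eta (w (inord k)) (w (inord k.+1))) - ln (Rd del (w (inord k)) (w (inord k.+1)))) =
   n.+1%:R * (\sum_x \sum_y emp_pair n w x y * (ln (Pt eta x y) - ln (Rd del x y))) -
   (ln (Pt eta (w ord_max) (w ord0)) - ln (Rd del (w ord_max) (w ord0))).
  by rewrite E addrK.
rewrite E2.
have E3 : \sum_x \sum_y emp_pair n w x y * (ln (Pt eta x y) - ln (Rd del x y)) =
  - \sum_x \sum_y emp_pair n w x y * (ln (Rd del x y) - ln (Pt eta x y)).
  rewrite -sumrN; apply: eq_bigr => x _; rewrite -sumrN; apply: eq_bigr => y _; ring.
rewrite E3.
have R1 : ln (Rd del (w ord_max) (w ord0)) <= 0 by rewrite ln_le0 // Rd_le1.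
have K1 := Kc_ge (w ord_max) (w ord0).
have nK : n.+1%:R * K0 <= n.+1%:R * (\sum_x \sum_y emp_pair n w x y * (ln (Rd del x y) - ln (Pt eta x y))).
  by rewrite ler_wpM2l.
lra.
Qed.


Lemma prob_bound n K0 :
  (forall w, in_Ki i pil L (emp_pair n w) ->
     K0 <= \sum_x \sum_y emp_pair n w x y * (ln (Rd del x y) - ln (Pt eta x y))) ->
  prob_Ki n i pil L mu P <= expR (- (n.+1%:R * K0) + Kc).
Proof.
move=> HK; rewrite /prob_Ki.
have pp0 : forall w, 0 <= pp n mu (Rd del) w.
  move=> w; rewrite /pp mulr_ge0 //; first by case: Hmu.
  by apply: prodr_ge0 => k _; rewrite ltW ?Rd_gt0.
apply: le_trans (_ : \sum_(w | `[< in_Ki i pil L (emp_pair n w) >])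
   pp n mu (Rd del) w * expR (- (n.+1%:R * K0) + Kc) <= _).
  apply: ler_sum => w /asboolP Hw; exact: path_bound (HK _ Hw).
rewrite -mulr_suml.
apply: le_trans (_ : (\sum_w pp n mu (Rd del) w) * expR (- (n.+1%:R * K0) + Kc) <= _).
  rewrite ler_wpM2r ?expR_ge0 //.
  rewrite [leRHS](bigID (fun w => `[< in_Ki i pil L (emp_pair n w) >])) /= lerDl.
  by apply: sumr_ge0 => w _.
rewrite (@path_sum R S mu (Rd del) n Rd_rows).
by case: Hmu => _ ->; rewrite mul1r.
Qed.

End Params.


Lemma prob_ge0 n : 0 <= prob_Ki n i pil L mu P.
Proof.
apply: sumr_ge0 => w _; rewrite /path_prob mulr_ge0 //; first by case: Hmu.
by apply: prodr_ge0 => k _; exact: P_ge0.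
Qed.

Lemma final_bound e : 0 < e -> exists K, forall n,
  prob_Ki n i pil L mu P <= expR (- (n.+1%:R * (Dst - e)) + K).
Proof.
move=> e0.
pose eps0 := e / (#|X i|%:R + 1).
have eps00 : 0 < eps0 by rewrite divr_gt0 // ltr_wpDl.
have epsX : eps0 * #|X i|%:R <= e.
  rewrite /eps0 mulrAC ler_pdivrMr ?ltr_wpDl // ler_wpM2l ?(ltW e0) //.
  by rewrite lerDl.
pose Pit := \sum_(x : S) pi x.
have Pit0 : 0 <= Pit by apply: sumr_ge0 => x _; exact: ltW (pi_gt0 x).
pose t := eps0 / (Pit + 1).
have t0 : 0 < t by rewrite divr_gt0 // ltr_wpDl.
pose del := 1 - expR (- t).
have del0 : 0 < del by rewrite subr_gt0 expR_lt1 oppr_lt0.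
have del1 : del < 1 by rewrite ltrBlDr ltrDl expR_gt0.
have Hd : - ln (1 - del) * Pit <= eps0.
  rewrite /del opprB addrC subrK expRK opprK /t mulrAC ler_pdivrMr ?ltr_wpDl //.
  by rewrite ler_wpM2l ?(ltW eps00) // lerDl.
pose C1 := \sum_(a : X i) \sum_(b : X i) `|c a b - Zi' a b * ln (del / #|S|%:R)|.
pose Tinv := \sum_(x : S) \sum_(y : S) (if pi x * Z x y == 0 then 0 else (pi x * Z x y)^-1).
have C10 : 0 <= C1 by apply: sumr_ge0 => a _; apply: sumr_ge0 => b _.
have Tinv0 : forall x y : S, 0 <= (if pi x * Z x y == 0 then 0 else (pi x * Z x y)^-1).
  by move=> x y; case: eqP => // _; rewrite invr_ge0 piZ_ge0.
pose eta := expR (- (C1 * Tinv)).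
have eta0 : 0 < eta by exact: expR_gt0.
have eta1 : eta <= 1.
  by rewrite expR_le1 oppr_le0 mulr_ge0 // sumr_ge0 // => x _; apply: sumr_ge0.
have He : forall a b (x y : S), 0 < pi x * Z x y ->
     c a b - Zi' a b * ln (del / #|S|%:R) <= pi x * Z x y * - ln eta.
  move=> a b x y pz; rewrite /eta expRK opprK.
  apply: le_trans (ler_norm _) _.
  have h1 : `|c a b - Zi' a b * ln (del / #|S|%:R)| <= C1.
    exact: (@sum2_term R _ _ (fun a b => `|c a b - Zi' a b * ln (del / #|S|%:R)|) a b (fun _ _ => normr_ge0 _)).
  apply: le_trans h1 _.
  have := @sum2_term R _ _ (fun x y : S => if pi x * Z x y == 0 then 0 else (pi x * Z x y)^-1) x y Tinv0.
  rewrite /= (gt_eqF pz) -/Tinv => hT.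
  have hT' : C1 * (pi x * Z x y)^-1 <= C1 * Tinv by rewrite ler_wpM2l.
  have := ler_wpM2l (ltW pz) hT'.
  by rewrite mulrCA divff ?mulr1 //; exact: (negbT (gt_eqF pz)).
exists (Kc eta) => n.
have H := @prob_bound del eta del0 del1 eta0 eta1 n (Dst - eps0 * #|X i|%:R).
apply: le_trans (H _) _.
  move=> w [M [Mt [_ HE]]].
  rewrite Dst_eq.
  rewrite (_ : \sum_x \sum_y _ = \sum_(x : S) \sum_(y : S)
      pi x * tensor_at i L M x y * (ln (Rd del x y) - ln (Pt eta x y))).
    exact: A_bound (ltW eps00) Hd He.
  by apply: eq_bigr => x _; apply: eq_bigr => y _; rewrite HE.
rewrite ler_expR lerD2r lerN2 ler_wpM2l //.
by rewrite lerB.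
Qed.

End Main.

Theorem theorem2p12 (R : realType) (d : nat) (X : 'I_d -> finType) (i : 'I_d)
  (pil : forall l, X l -> R)
  (P : state X -> state X -> R)
  (L : forall j, X j -> X j -> R)
  (mu : state X -> R) :
  (forall l, is_distr (pil l)) ->
  (forall l (a : X l), 0 < pil l a) ->
  is_trans P ->
  is_stationary (prod_distr pil) P ->
  (forall j, j != i -> is_trans (L j) /\ is_stationary (pil j) (L j)) ->
  is_distr mu ->
  (forall a : X i, 0 < \sum_(b : X i) Lstar_w i (prod_distr pil) P L a b) ->
  (limn_esup (fun n : nat =>
      ((n.+1%:R)^-1)%:E * eln (prob_Ki n i pil L mu P))
   <= - Df_revKL (prod_distr pil) P
          (tensor_at i L (Lstar i (prod_distr pil) P L)))%E.
Proof.
move=> Hpil Hpos HP HPst HL Hmu HN.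
rewrite D_real // -EFinN.
apply: limsup_bound => [n|e e0]; first by apply: prob_ge0.
by apply: final_bound.
Qed.
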